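(* Let $w\in\Sigma^*$ with $\iota(w)\ge 2$ and let $u$ be a nonempty scattered factor of $w$ with $|u|<\iota(w)$. If $u[1]\neq\operatorname{m}(w)[1]$, then $|C(w,u)|>1$.
   Context: The alphabet $\Sigma$ is exactly the set of letters occurring in $w$, with $|\Sigma|\ge2$. The universality index $\iota(w)$ is the largest $k$ such that every word in $\Sigma^k$ is a scattered factor (subsequence) of $w$. The arch factorisation of $w$ is $w=\operatorname{ar}_1(w)\cdots\operatorname{ar}_k(w)\operatorname{r}(w)$ where each arch contains every letter of $\Sigma$ and its last letter does not occur elsewhere in it, and $\operatorname{r}(w)$ does not contain all letters of $\Sigma$; then $k=\iota(w)$. The modus $\operatorname{m}(w)$ is the word of last letters of the arches in order. An embedding of $u$ in $w$ is a map $e:\{1,\dots,|u|\}\to\{1,\dots,|w|\}$ with $e(1)<\dots<e(|u|)$ and $u[i]=w[e(i)]$. The shuffle $\mathrm{Sh}(u,v)$ is the set of words of length $|u|+|v|$ admitting an embedding of $u$ and one of $v$ with disjoint images covering all positions, and $C(w,u)=\{v\in\Sigma^{|w|-|u|}: w\in\mathrm{Sh}(u,v)\}$. *)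

(* Defs.v *)
From mathcomp Require Import all_boot.
Set Implicit Arguments. Unset Strict Implicit. Unset Printing Implicit Defensive.

(* Words over an alphabet with decidable equality: w : seq T.
   The alphabet Sigma of w is the set of letters occurring in w (undup w). *)

Definition k_universal (T : eqType) (k : nat) (w : seq T) : Prop :=
  forall v : seq T, size v = k -> all (fun a => a \in w) v -> subseq v w.

Definition is_iota (T : eqType) (w : seq T) (k : nat) : Prop :=
  k_universal k w /\ forall k', k_universal k' w -> k' <= k.

(* Greedy arch factorisation w.r.t. the alphabet S: each arch is the shortest
   prefix of the remaining word containing all letters of S. *)
Fixpoint archs (T : eqType) (S : seq T) (fuel : nat) (w : seq T) : seq (seq T) :=
  match fuel with
  | 0 => [::]
  | f.+1 =>
      let i := find (fun n => all (fun c => c \in take n w) S) (iota 1 (size w)) in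
      if i < size w then take i.+1 w :: archs S f (drop i.+1 w) else [::]
  end.

Definition arches (T : eqType) (w : seq T) : seq (seq T) := archs (undup w) (size w) w.

Definition modus (T : eqType) (w : seq T) : seq T :=
  pmap (fun a => if a is x :: a' then Some (last x a') else None) (arches w).

(* w in Sh(u,v): two embeddings with disjoint images covering all positions,
   encoded by the bitmask of positions of the embedding of u. *)
Definition in_shuffle (T : eqType) (w u v : seq T) : Prop :=
  exists m : bitseq, size m = size w /\ mask m w = u /\ mask (map negb m) w = v.

Definition inC (T : eqType) (w u v : seq T) : Prop :=
  size v = size w - size u /\ in_shuffle w u v.

(* Main.v *)
Require Import Defs.
From mathcomp Require Import all_boot.

Lemma mask_sizeC (T : eqType) (m : bitseq) (s : seq T) :
  size m = size s -> size (mask m s) + size (mask (map negb m) s) = size s.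
Proof.
elim: m s => [|c m IH] [|x s] //= [E]; case: c => /=;
  by rewrite ?addSn ?addnS IH.
Qed.

Lemma shuffle_inC (T : eqType) (w u : seq T) m :
  size m = size w -> mask m w = u -> inC w u (mask (map negb m) w).
Proof.
move=> Hs Hu; split; last by exists m.
by rewrite -(@mask_sizeC _ _ _ Hs) Hu addKn.
Qed.

Lemma subseq_first (T : eqType) (b : T) v x y :
  b \notin x -> subseq (b :: v) (x ++ b :: y) -> subseq v y.
Proof.
elim: x => [|c x IH] /=; first by rewrite eqxx.
rewrite inE negb_or => /andP [Hbc Hbx]; rewrite (negbTE Hbc); exact: IH.
Qed.

Lemma subseq_split (T : eqType) (a : T) u y :
  subseq (a :: u) y -> exists y1 y2, y = y1 ++ a :: y2 /\ subseq u y2.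
Proof.
elim: y => [|c y IH] //=.
case: eqP => [<- H|_ /IH [y1 [y2 [-> H]]]]; first by exists [::], y.
by exists (c :: y1), y2.
Qed.

Lemma mask_skip (T : eqType) (x s : seq T) m :
  mask (nseq (size x) false ++ m) (x ++ s) = mask m s.
Proof. by elim: x => //= c x ->. Qed.

Lemma mask_skipN (T : eqType) (x s : seq T) m :
  mask (map negb (nseq (size x) false ++ m)) (x ++ s) = x ++ mask (map negb m) s.
Proof. by elim: x => //= c x ->. Qed.

Arguments subseq_first [T b v x y].
Arguments subseq_split [T a u y].

Theorem lemma24 (T : eqType) (w u : seq T) (k : nat) :
  2 <= size (undup w) ->
  is_iota w k ->
  2 <= k ->
  u != [::] ->
  subseq u w ->
  size u < k ->
  ohead u <> ohead (modus w) ->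
  exists v1 v2 : seq T, inC w u v1 /\ inC w u v2 /\ v1 <> v2.
Proof.
move=> HS [Huniv _] Hk Hu0 Hsub Hsz Hhead.
case: u Hu0 Hsub Hsz Hhead => [//|a u'] _ Hsub Hsz Hhead.
have Haw : a \in w by apply: (mem_subseq Hsub); rewrite inE eqxx.
set S := undup w.
set P := fun n => all (fun c => c \in take n w) S.
have Hw0 : 0 < size w by case: (w) Haw.
have HPw : P (size w) by rewrite /P take_size; apply/allP => c; rewrite mem_undup.
have Hhas : has P (iota 1 (size w)).
  by apply/hasP; exists (size w) => //; rewrite mem_iota add1n ltnSn Hw0.
set i := find P (iota 1 (size w)).
have Hi : i < size w by rewrite -[X in _ < X](size_iota 1) -has_find.
have Hnth : nth 0 (iota 1 (size w)) i = i.+1 by rewrite nth_iota // add1n.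
have HPi1 : P i.+1 by rewrite -Hnth; apply: nth_find.
pose b := nth a w i.
have Htk : take i.+1 w = rcons (take i w) b := take_nth a Hi.
have Hw : w = take i w ++ b :: drop i.+1 w by rewrite -drop_nth // cat_take_drop.
have Ef : forall f, archs S f.+1 w = take i.+1 w :: archs S f (drop i.+1 w).
  by move=> f /=; rewrite -/P -/i Hi.
have Hmod : ohead (modus w) = Some b.
  rewrite /modus /arches -/S -(prednK Hw0) Ef Htk.
  by case: (take i w) => [|c s] //=; rewrite last_rcons.
have Hab : a != b by apply/eqP => Eab; apply: Hhead; rewrite Hmod Eab.
have HaS : a \in take i w.
  move/allP: HPi1 => /(_ a); rewrite mem_undup Haw Htk mem_rcons inE (negbTE Hab).
  by move=> /(_ isT).
have HbS : b \notin take i w.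
  apply/negP => Hb.
  have HPi : P i.
    apply/allP => c cS; move/allP: HPi1 => /(_ c cS); rewrite Htk mem_rcons inE.
    by case/orP => [/eqP->|].
  move: Hb; case Ei: i => [|j]; first by rewrite take0.
  move=> _.
  have := @before_find _ 0 P (iota 1 (size w)) j.
  rewrite -/i Ei ltnSn nth_iota ?add1n; last by rewrite -ltnS -Ei ltnW.
  by rewrite -Ei HPi => /(_ isT).
set y := drop i.+1 w.
have Hv : subseq (b :: ((a :: u') ++ nseq (k.-1 - size (a :: u')) a)) w.
  apply: Huniv.
    rewrite /= size_cat size_nseq /= -addSn subnKC ?prednK //; first by rewrite (ltn_trans _ Hk).
    by rewrite -ltnS prednK // (ltn_trans _ Hk).
  apply/allP => c; rewrite inE => /orP [/eqP->|]; first exact: mem_nth.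
  rewrite mem_cat => /orP [Hc|].
    exact: (mem_subseq Hsub).
  by move/nseqP => [-> _].
have Huy : subseq (a :: u') y.
  apply: (subseq_trans (prefix_subseq _ (nseq (k.-1 - size (a :: u')) a))).
  apply: (subseq_first HbS); rewrite /y -Hw; exact: Hv.
case/subseq_split: Huy => y1 [y2 [Ey Hu2]].
have [x1 [x2 Ex]] : exists x1 x2, take i w = x1 ++ a :: x2.
  by case/splitPr: HaS => x1 x2; exists x1, x2.
have Hw' : w = x1 ++ a :: x2 ++ b :: y1 ++ a :: y2 by rewrite Hw Ex -/y Ey -catA.
case/subseqP: Hu2 => m' Hm' Eu'.
clear -Hw' Hab Hm' Eu'.
pose m1 := nseq (size x1) false ++ true :: nseq (size x2) false ++ false :: nseq (size y1) false ++ false :: m'.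
pose m2 := nseq (size x1) false ++ false :: nseq (size x2) false ++ false :: nseq (size y1) false ++ true :: m'.
have Hs1 : size m1 = size w.
  by rewrite Hw' /m1; do 4! rewrite ?size_cat ?size_nseq /=; rewrite Hm'.
have Hs2 : size m2 = size w.
  by rewrite Hw' /m2; do 4! rewrite ?size_cat ?size_nseq /=; rewrite Hm'.
exists (mask (map negb m1) w), (mask (map negb m2) w).
split; first by apply: shuffle_inC => //; rewrite Hw' /m1 mask_skip /= mask_skip /= mask_skip /= Eu'.
split; first by apply: shuffle_inC => //; rewrite Hw' /m2 mask_skip /= mask_skip /= mask_skip /= Eu'.
rewrite Hw' /m1 /m2 !mask_skipN /= !mask_skipN /= !mask_skipN /=.
set c := mask _ y2.
move=> E.
have : (x1 ++ x2 ++ [:: b]) ++ (y1 ++ a :: c) = (x1 ++ a :: x2) ++ (b :: y1 ++ c).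
  by rewrite -!catA /=.
move/eqP; rewrite eqseq_cat; last by rewrite !size_cat /= addn1 addnS.
case/andP => /eqP /(congr1 (count_mem a)).
rewrite !count_cat /= eqxx eq_sym (negbTE Hab) /= addn0 add1n addnS => /eqP.
by move=> /eqP; rewrite addn0 -addnS => /addnI /n_Sn.
Qed.
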